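(* Let $I$ be a proper ideal of a monoid $M$. Then $\mathfrak{L}(\mathrm{Val},\mathrm{CF},M)=\mathfrak{L}(\mathrm{Val},\mathrm{CF},M/I)$.
   Context: An ideal of a monoid $M$ is $I\subseteq M$ with $MIM\subseteq I$; it is proper if $I\ne M$. The Rees quotient $M/I$ is the quotient of $M$ by the congruence $a\sim b$ iff $a=b$ or $a,b\in I$; its elements are $I$ and the singletons $\{x\}$, $x\in M\setminus I$, with identity $\{1\}$. A context-free valence grammar over a monoid $N$ is $(V,T,P,S,N)$ with nonterminals $V$, terminals $T$, start symbol $S\in V$ and a finite set $P$ of rules $(A\to\alpha,n)$ with $A\in V$, $\alpha\in(V\cup T)^*$, $n\in N$. One step: $(w_1Aw_2,m)\Rightarrow(w_1\alpha w_2,mn)$ for a rule $(A\to\alpha,n)$. The generated language is $\{w\in T^*:(S,1)\Rightarrow^*(w,1)\}$. $\mathfrak{L}(\mathrm{Val},\mathrm{CF},N)$ is the family of languages generated by context-free valence grammars over $N$. *)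

(* Defs.v *)
From Stdlib Require Import List Relations ClassicalDescription.
From mathcomp Require Import ssreflect ssrfun ssrbool eqtype fintype.
Import ListNotations.
Set Implicit Arguments.
Unset Strict Implicit.

Record monoid_ops := MonoidOps {
  carrier :> Type;
  mop : carrier -> carrier -> carrier;
  munit : carrier }.

Definition is_monoid (M : monoid_ops) : Prop :=
  (forall x y z : M, mop x (mop y z) = mop (mop x y) z) /\
  (forall x : M, mop (munit M) x = x) /\
  (forall x : M, mop x (munit M) = x).

Definition is_ideal (M : monoid_ops) (I : M -> Prop) : Prop :=
  forall a x b : M, I x -> I (mop (mop a x) b).

Definition proper_ideal (M : monoid_ops) (I : M -> Prop) : Prop :=
  exists x : M, ~ I x.

(* Rees quotient M/I: the class I is represented by None, the singleton
   {x} (x ∉ I) by Some x. *)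
Definition rees_carrier (M : monoid_ops) (I : M -> Prop) : Type :=
  option {x : M | ~ I x}.

Definition rees_class (M : monoid_ops) (I : M -> Prop) (x : M)
  : rees_carrier I :=
  match excluded_middle_informative (I x) with
  | left _ => None
  | right h => Some (exist (fun y => ~ I y) x h)
  end.

Definition rees_mul (M : monoid_ops) (I : M -> Prop)
  (a b : rees_carrier I) : rees_carrier I :=
  match a, b with
  | Some x, Some y => rees_class I (mop (proj1_sig x) (proj1_sig y))
  | _, _ => None
  end.

Definition rees_quotient (M : monoid_ops) (I : M -> Prop) : monoid_ops :=
  @MonoidOps (rees_carrier I) (@rees_mul M I) (rees_class I (munit M)).

Record valence_grammar (N : monoid_ops) (V T : finType) := VGrammar {
  vg_rules : list (V * list (V + T) * N);
  vg_start : V }.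

Inductive vg_step (N : monoid_ops) (V T : finType) (G : valence_grammar N V T)
  : list (V + T) * N -> list (V + T) * N -> Prop :=
| VGStep : forall (w1 w2 alpha : list (V + T)) (A : V) (m n : N),
    In (A, alpha, n) (vg_rules G) ->
    vg_step G (w1 ++ inl A :: w2, m) (w1 ++ alpha ++ w2, mop m n).

Definition vg_generates (N : monoid_ops) (V T : finType)
  (G : valence_grammar N V T) (w : list T) : Prop :=
  clos_refl_trans _ (vg_step G) ([inl (vg_start G)], munit N)
                                (map inr w, munit N).

Definition in_L_Val_CF (N : monoid_ops) (T : finType) (L : list T -> Prop)
  : Prop :=
  exists (V : finType) (G : valence_grammar N V T),
    forall w, L w <-> vg_generates G w.

(* Main.v *)
Require Import Defs.
From mathcomp Require Import ssreflect fintype.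
From Stdlib Require Import List Relations ClassicalDescription ProofIrrelevance.
Import ListNotations.

Section S.
Variables (M : monoid_ops) (I : M -> Prop).
Hypothesis HM : is_monoid M.
Hypothesis HI : is_ideal I.
Hypothesis HP : proper_ideal I.

Lemma not_I1 : ~ I (munit M).
Proof.
  move=> h. case: HP => x hx. apply: hx.
  have := HI (munit M) (munit M) x h. case: HM => _ [hl hr]. by rewrite hr hl.
Qed.

Lemma class_hom (m n : M) :
  rees_class I (mop m n) = rees_mul (rees_class I m) (rees_class I n).
Proof.
  case: HM => ha [hl hr].
  rewrite /rees_class.
  case: (excluded_middle_informative (I m)) => hm.
  - case: (excluded_middle_informative (I (mop m n))) => // h.
    exfalso; apply: h. have := HI (munit M) m n hm. by rewrite hl.
  - case: (excluded_middle_informative (I n)) => hn.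
    + case: (excluded_middle_informative (I (mop m n))) => // h.
      exfalso; apply: h. have := HI m n (munit M) hn. by rewrite hr.
    + rewrite /rees_mul /=. by rewrite /rees_class.
Qed.

Lemma class_some (x : {y : M | ~ I y}) : rees_class I (proj1_sig x) = Some x.
Proof.
  rewrite /rees_class. case: x => x hx /=.
  case: (excluded_middle_informative (I x)) => h; first by case: (hx h).
  by rewrite (proof_irrelevance _ h hx).
Qed.

Lemma class_eq1 p : rees_class I p = rees_class I (munit M) -> p = munit M.
Proof.
  have h1 := not_I1.
  rewrite /rees_class.
  case: (excluded_middle_informative (I (munit M))) => h; first by case: (h1 h).
  case: (excluded_middle_informative (I p)) => hp //.
  by move=> [] e.
Qed.

Lemma class1_none : rees_class I (munit M) <> None.
Proof.
  rewrite /rees_class.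
  case: (excluded_middle_informative (I (munit M))) => h //.
  by case: (not_I1 h).
Qed.

Variables (V T : finType) (G1 : valence_grammar M V T)
  (G2 : valence_grammar (rees_quotient I) V T).
Hypothesis HA : forall A al n, In (A, al, n) (vg_rules G1) ->
  In (A, al, rees_class I n) (vg_rules G2).
Hypothesis HB : forall A al c, In (A, al, c) (vg_rules G2) ->
  c = None \/ exists n, rees_class I n = c /\ In (A, al, n) (vg_rules G1).
Hypothesis Hst : vg_start G1 = vg_start G2.

Lemma fwd x y : clos_refl_trans _ (vg_step G1) x y ->
  clos_refl_trans _ (vg_step G2) (fst x, rees_class I (snd x)) (fst y, rees_class I (snd y)).
Proof.
  elim=> {x y}.
  - move=> x y [] w1 w2 al A m n hin /=.
    apply: rt_step. rewrite /= class_hom.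
    apply: VGStep. exact: HA.
  - move=> x; exact: rt_refl.
  - move=> x y z _ h1 _ h2; exact: rt_trans h1 h2.
Qed.

Lemma bwd y : clos_refl_trans _ (vg_step G2) ([inl (vg_start G2)], munit (rees_quotient I)) y ->
  snd y = None \/ exists p, rees_class I p = snd y /\
   clos_refl_trans _ (vg_step G1) ([inl (vg_start G1)], munit M) (fst y, p).
Proof.
  move=> h; apply clos_rt_rtn1 in h; elim: h => {y}.
  - right. exists (munit M); split; [reflexivity | rewrite /= Hst; apply rt_refl].
  - move=> y z [] w1 w2 al A m c hin _ IH /=.
    case: IH => [/= -> | [p [/= hp hr]]]; first by left.
    case: (HB _ _ _ hin) => [-> | [n [hn hin1]]].
    + left. by case: m {hp}.
    + right. exists (mop p n). split; first by rewrite class_hom hp hn.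
      apply: rt_trans hr _. apply: rt_step. exact: VGStep.
Qed.

Lemma sim_gen w : vg_generates G1 w <-> vg_generates G2 w.
Proof.
  rewrite /vg_generates. split.
  - move/fwd => /=. by rewrite Hst.
  - move/bwd => /= [h | [p [hp hr]]]; first by case: (class1_none h).
    by move: hr; rewrite (class_eq1 _ hp).
Qed.
End S.

Theorem proposition3 (M : monoid_ops) (I : M -> Prop) :
  is_monoid M -> is_ideal I -> proper_ideal I ->
  forall (T : finType) (L : list T -> Prop),
    in_L_Val_CF M L <-> in_L_Val_CF (rees_quotient I) L.
Proof.
  move=> HM HI HP T L. split.
  - move=> [V [G1 HL]].
    exists V.
    exists (@VGrammar (rees_quotient I) V T
      (map (fun r : V * list (V + T) * M => (fst (fst r), snd (fst r), rees_class I (snd r))) (vg_rules G1))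
      (vg_start G1)).
    move=> w. rewrite HL. apply: sim_gen => //.
    + move=> A al n hin /=.
      exact: (in_map (fun r : V * list (V + T) * M => (fst (fst r), snd (fst r), rees_class I (snd r))) _ _ hin).
    + move=> A al c /= /in_map_iff [[[A' al'] n] [[-> -> <-] hin]].
      right. by exists n.
  - move=> [V [G2 HL]].
    exists V.
    exists (@VGrammar M V T
      (flat_map (fun r : V * list (V + T) * rees_quotient I =>
         match snd r with Some x => [(fst (fst r), snd (fst r), proj1_sig x)] | None => [] end)
         (vg_rules G2))
      (vg_start G2)).
    move=> w. rewrite HL. symmetry. apply: sim_gen => //.
    + move=> A al n /= /in_flat_map [[[A' al'] [x|]] [hin /= h]]; last by case: h.
      case: h => // [[<- <- <-]]. by rewrite class_some.
    + move=> A al [x|] hin; last by left.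
      right. exists (proj1_sig x). split; first exact: class_some.
      apply/in_flat_map. exists (A, al, Some x). split => //=. by left.
Qed.
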